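(* Let $m\ge1$, let $W$ be a B-DMC, and let $E[J_n]$ be as in the context. For integers $k\ge0$ define $E[\hat J_k]=\min_{i\in\{0,1,\dots,m-1\}}E[J_{km-i}]$. Then $E[\hat J_k]\ge E[\hat J_{k-1}]$ for every $k\ge1$.
   Context: Fix an integer $m\ge1$. Define integers $N(n)$ by $N(n)=1$ for $1-m\le n\le 0$ and $N(n)=N(n-1)+N(n-m)$ for $n\ge1$; write $\mathbb N_n=\{1,\dots,N(n)\}$ (so $\mathbb N_n=\{1\}$ for $n\le 0$, and $\mathbb N_{n-m}\subseteq\mathbb N_{n-1}$). Define vectors $\mathbf s_n^{(i)}\in\{+,-,\bigstar\}^n$ for $n\ge0$, $i\in\mathbb N_n$, recursively: $\mathbf s_0^{(1)}$ is the empty vector, and for $n\ge1$: $\mathbf s_n^{(j)}=(\mathbf s_{n-1}^{(j)},+)$ and $\mathbf s_n^{(j+N(n-1))}=(\mathbf s_{n-1}^{(j)},-)$ for $j\in\mathbb N_{n-m}$, while $\mathbf s_n^{(j)}=(\mathbf s_{n-1}^{(j)},\bigstar)$ for $j\in\mathbb N_{n-1}\setminus\mathbb N_{n-m}$. Let $\mathcal S_n=\{\mathbf s_n^{(i)}:i\in\mathbb N_n\}$ for $n\ge1$. A B-DMC $V$ is a channel with input alphabet $\{0,1\}$, a finite output alphabet $\mathcal Y$ and transition probabilities $V(y|x)$. With base-2 logarithms and uniform input: $I(V)=\sum_{y}\sum_{x}\frac12V(y|x)\log\frac{V(y|x)}{\frac12V(y|0)+\frac12V(y|1)}$, $Z(V)=\sum_y\sqrt{V(y|0)V(y|1)}$,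 $J(V)=\log\frac{2}{1+Z(V)}$. For B-DMCs $V':\{0,1\}\to\mathcal Y_1$ and $V'':\{0,1\}\to\mathcal Y_2$ define $V'\boxminus V'':\{0,1\}\to\mathcal Y_1\times\mathcal Y_2$ by $(V'\boxminus V'')(y_1,y_2|x_1)=\sum_{x_2\in\{0,1\}}\frac12V'(y_1|x_1\oplus x_2)V''(y_2|x_2)$, and $V'\boxplus V'':\{0,1\}\to\mathcal Y_1\times\mathcal Y_2\times\{0,1\}$ by $(V'\boxplus V'')(y_1,y_2,x_1|x_2)=\frac12V'(y_1|x_1\oplus x_2)V''(y_2|x_2)$. Fix a B-DMC $W$. For every finite string $\mathbf t=(t_1,\dots,t_n)\in\{+,-,\bigstar\}^n$, $n\ge0$, define a B-DMC $W_{\mathbf t}$ recursively: $W_{\emptyset}=W$ for the empty string; for $n\ge1$ let $\mathbf t'=(t_1,\dots,t_{n-1})$ and $\mathbf t''=(t_1,\dots,t_{n-m})$ (the empty string if $n\le m$); then $W_{\mathbf t}=W_{\mathbf t''}\boxplus W_{\mathbf t'}$ if $t_n=+$, $W_{\mathbf t}=W_{\mathbf t''}\boxminus W_{\mathbf t'}$ if $t_n=-$, and $W_{\mathbf t}=W_{\mathbf t'}$ if $t_n=\bigstar$. For $n\ge1$ let $E[J_n]=\frac{1}{N(n)}\sum_{\mathbf s\in\mathcal S_n}J(W_{\mathbf s})$, and for $n\le0$ let $E[J_n]=J(W)$. *)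

(* Defs.v *)
From Stdlib Require Import Reals List Arith ZArith.
Import ListNotations.
Open Scope R_scope.

(* A B-DMC with input {0,1} and finite output alphabet {0,...,k-1} is
   represented by its transition matrix, listed output by output:
   the y-th entry is the pair (V(y|0), V(y|1)). *)
Definition channel := list (R * R).

Definition valid_channel (V : channel) : Prop :=
  Forall (fun p => 0 <= fst p /\ 0 <= snd p) V /\
  fold_right Rplus 0 (map fst V) = 1 /\
  fold_right Rplus 0 (map snd V) = 1.

Definition log2 (x : R) : R := ln x / ln 2.

Definition Zb (V : channel) : R :=
  fold_right Rplus 0 (map (fun p => sqrt (fst p * snd p)) V).
Definition Jc (V : channel) : R := log2 (2 / (1 + Zb V)).

(* (V' boxminus V'')(y1,y2|x1) = sum_{x2} 1/2 V'(y1|x1+x2) V''(y2|x2);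
   outputs (y1,y2) enumerated over y1 then y2. *)
Definition boxminus (V' V'' : channel) : channel :=
  flat_map (fun p => map (fun q =>
     (/2 * (fst p * fst q + snd p * snd q),
      /2 * (snd p * fst q + fst p * snd q))) V'') V'.

(* (V' boxplus V'')(y1,y2,x1|x2) = 1/2 V'(y1|x1+x2) V''(y2|x2);
   outputs (y1,y2,x1) with x1 = 0 then x1 = 1. *)
Definition boxplus (V' V'' : channel) : channel :=
  flat_map (fun p => flat_map (fun q =>
     [ (/2 * (fst p * fst q), /2 * (snd p * snd q)) ;
       (/2 * (snd p * fst q), /2 * (fst p * snd q)) ]) V'') V'.

Inductive sym : Set := Plus | Minus | Star.

(* Window of the integers N: Nwin m k = [N(k); N(k-1); ...; N(k-m+1)],
   with N(j) = 1 for 1-m <= j <= 0 and N(n) = N(n-1) + N(n-m) for n >= 1. *)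
Fixpoint Nwin (m k : nat) : list nat :=
  match k with
  | O => repeat 1%nat m
  | S k' => let w := Nwin m k' in (hd 1%nat w + last w 1%nat)%nat :: removelast w
  end.

(* N(n) for n >= 0.  For n <= 0 one has N(n) = 1 = N(0), so N(n - m) with
   truncated nat subtraction is correct. *)
Definition Nn (m n : nat) : nat := hd 1%nat (Nwin m n).

(* S_n as a list of strings (t_1, ..., t_n), indices ordered as in the paper:
   s^(j) for j in N_{n-m}, then j in N_{n-1} \ N_{n-m}, then j + N(n-1). *)
Fixpoint Sset (m n : nat) : list (list sym) :=
  match n with
  | O => [ [] ]
  | S n' =>
    let P := Sset m n' in
    let k := Nn m (S n' - m) in
    map (fun s => s ++ [Plus]) (firstn k P) ++
    map (fun s => s ++ [Star]) (skipn k P) ++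
    map (fun s => s ++ [Minus]) (firstn k P)
  end.

(* W_t, defined with fuel (length t suffices since m >= 1). *)
Fixpoint Wfuel (m : nat) (W : channel) (fuel : nat) (t : list sym) : channel :=
  match fuel with
  | O => W
  | S f =>
    match t with
    | [] => W
    | _ =>
      let t' := removelast t in
      let t'' := firstn (length t - m) t in
      match last t Star with
      | Plus => boxplus (Wfuel m W f t'') (Wfuel m W f t')
      | Minus => boxminus (Wfuel m W f t'') (Wfuel m W f t')
      | Star => Wfuel m W f t'
      end
    end
  end.

Definition Wt (m : nat) (W : channel) (t : list sym) : channel :=
  Wfuel m W (length t) t.

Definition EJ (m : nat) (W : channel) (n : Z) : R :=
  if (n <=? 0)%Z then Jc W
  else let nn := Z.to_nat n in
       / INR (Nn m nn) *
       fold_right Rplus 0 (map (fun s => Jc (Wt m W s)) (Sset m nn)).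

Definition EJhat (m : nat) (W : channel) (k : nat) : R :=
  fold_right Rmin (EJ m W (Z.of_nat k * Z.of_nat m)%Z)
    (map (fun i => EJ m W (Z.of_nat k * Z.of_nat m - Z.of_nat i)%Z) (seq 0 m)).

Example N_test : map (Nn 2) [0;1;2;3;4;5]%nat = [1;2;3;5;8;13]%nat.
Proof. reflexivity. Qed.
Example S_test : length (Sset 2 4) = 8%nat.
Proof. reflexivity. Qed.

(* Main.v *)
Require Import Defs.
From Stdlib Require Import Reals List Arith ZArith Lra Lia Psatz.
Import ListNotations.
Open Scope R_scope.

Notation SR := (fold_right Rplus 0).

Lemma SR_app l1 l2 : SR (l1 ++ l2) = SR l1 + SR l2.
Proof. induction l1; simpl; [ring|]. rewrite IHl1; ring. Qed.

Lemma SR_map_ext {A} (f g : A -> R) l : (forall x, In x l -> f x = g x) -> SR (map f l) = SR (map g l).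
Proof. induction l; simpl; intros H; auto. rewrite H, IHl; auto. Qed.

Lemma SR_map_le {A} (f g : A -> R) l : (forall x, In x l -> f x <= g x) -> SR (map f l) <= SR (map g l).
Proof. induction l; simpl; intros H; [lra|]. apply Rplus_le_compat; auto. Qed.

Lemma SR_nonneg {A} (f : A -> R) l : (forall x, In x l -> 0 <= f x) -> 0 <= SR (map f l).
Proof. induction l; simpl; intros H; [lra|]. pose proof (H a (or_introl eq_refl)). pose proof (IHl (fun x h => H x (or_intror h))). lra. Qed.

Lemma SR_flat_map {A B} (g : B -> R) (h : A -> list B) l :
  SR (map g (flat_map h l)) = SR (map (fun p => SR (map g (h p))) l).
Proof. induction l; simpl; auto. rewrite map_app, SR_app, IHl; auto. Qed.

Lemma SR_lin2 a b (l : channel) : SR (map (fun p => a * fst p + b * snd p) l) = a * SR (map fst l) + b * SR (map snd l).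
Proof. induction l; simpl; [ring|]. rewrite IHl; ring. Qed.

Lemma SR_scal {A} c (f : A -> R) l : SR (map (fun x => c * f x) l) = c * SR (map f l).
Proof. induction l; simpl; [ring|]. rewrite IHl; ring. Qed.

Lemma SR2_le {A} (f g h i : A -> R) l : (forall x, In x l -> f x + g x >= h x + i x) ->
  SR (map f l) + SR (map g l) >= SR (map h l) + SR (map i l).
Proof. induction l; simpl; intros H; [lra|]. pose proof (H a (or_introl eq_refl)). pose proof (IHl (fun x h => H x (or_intror h))). lra. Qed.

Definition nonneg (V : channel) := Forall (fun p => 0 <= fst p /\ 0 <= snd p) V.

Lemma boxplus_valid V1 V2 : valid_channel V1 -> valid_channel V2 -> valid_channel (boxplus V1 V2).
Proof.
  intros [F1 [A1 B1]] [F2 [A2 B2]]. unfold boxplus. split; [|split].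
  - apply Forall_forall. intros x Hx. apply in_flat_map in Hx as [p [Hp Hx]].
    apply in_flat_map in Hx as [q [Hq Hx]].
    rewrite Forall_forall in F1, F2. destruct (F1 p Hp), (F2 q Hq).
    simpl in Hx. destruct Hx as [<-|[<-|[]]]; simpl; split; nra.
  - rewrite SR_flat_map.
    transitivity (SR (map (fun p => /2 * fst p + /2 * snd p) V1)).
    + apply SR_map_ext; intros p _. rewrite SR_flat_map.
      transitivity (SR (map (fun q => (/2 * (fst p + snd p)) * fst q + 0 * snd q) V2)).
      * apply SR_map_ext; intros q _; simpl; ring.
      * rewrite SR_lin2, A2, B2; ring.
    + rewrite SR_lin2, A1, B1; lra.
  - rewrite SR_flat_map.
    transitivity (SR (map (fun p => /2 * fst p + /2 * snd p) V1)).
    + apply SR_map_ext; intros p _. rewrite SR_flat_map.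
      transitivity (SR (map (fun q => 0 * fst q + (/2 * (fst p + snd p)) * snd q) V2)).
      * apply SR_map_ext; intros q _; simpl; ring.
      * rewrite SR_lin2, A2, B2; ring.
    + rewrite SR_lin2, A1, B1; lra.
Qed.

Lemma boxminus_valid V1 V2 : valid_channel V1 -> valid_channel V2 -> valid_channel (boxminus V1 V2).
Proof.
  intros [F1 [A1 B1]] [F2 [A2 B2]]. unfold boxminus. split; [|split].
  - apply Forall_forall. intros x Hx. apply in_flat_map in Hx as [p [Hp Hx]].
    apply in_map_iff in Hx as [q [<- Hq]].
    rewrite Forall_forall in F1, F2. destruct (F1 p Hp), (F2 q Hq).
    simpl; split; nra.
  - rewrite SR_flat_map.
    transitivity (SR (map (fun p => /2 * fst p + /2 * snd p) V1)).
    + apply SR_map_ext; intros p _. rewrite map_map.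
      transitivity (SR (map (fun q => (/2 * fst p) * fst q + (/2 * snd p) * snd q) V2)).
      * apply SR_map_ext; intros q _; simpl; ring.
      * rewrite SR_lin2, A2, B2; ring.
    + rewrite SR_lin2, A1, B1; lra.
  - rewrite SR_flat_map.
    transitivity (SR (map (fun p => /2 * fst p + /2 * snd p) V1)).
    + apply SR_map_ext; intros p _. rewrite map_map.
      transitivity (SR (map (fun q => (/2 * snd p) * fst q + (/2 * fst p) * snd q) V2)).
      * apply SR_map_ext; intros q _; simpl; ring.
      * rewrite SR_lin2, A2, B2; ring.
    + rewrite SR_lin2, A1, B1; lra.
Qed.

Lemma sqrt_am x y : 0 <= x -> 0 <= y -> sqrt (x * y) <= /2 * x + /2 * y.
Proof.
  intros. rewrite sqrt_mult by auto.
  pose proof (sqrt_sqrt x H); pose proof (sqrt_sqrt y H0).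
  pose proof (Rle_0_sqr (sqrt x - sqrt y)). unfold Rsqr in *. nra.
Qed.

Lemma Zb_nonneg V : 0 <= Zb V.
Proof. unfold Zb. apply SR_nonneg. intros; apply sqrt_pos. Qed.

Lemma Zb_le1 V : valid_channel V -> Zb V <= 1.
Proof.
  intros [F [A B]]. unfold Zb.
  apply Rle_trans with (SR (map (fun p => /2 * fst p + /2 * snd p) V)).
  - apply SR_map_le. intros p Hp. rewrite Forall_forall in F. destruct (F p Hp).
    apply sqrt_am; auto.
  - rewrite SR_lin2, A, B; lra.
Qed.

Lemma sqrt_half a b c d : 0 <= a -> 0 <= b -> 0 <= c -> 0 <= d ->
  sqrt (/2 * (a * c) * (/2 * (b * d))) = /2 * (sqrt (a * b) * sqrt (c * d)).
Proof.
  intros. replace (/2 * (a * c) * (/2 * (b * d))) with ((/2 * /2) * ((a * b) * (c * d))) by ring.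
  rewrite sqrt_mult, sqrt_square, sqrt_mult; try lra; apply Rmult_le_pos; nra.
Qed.

Lemma Zb_boxplus V1 V2 : valid_channel V1 -> valid_channel V2 -> Zb (boxplus V1 V2) = Zb V1 * Zb V2.
Proof.
  intros [F1 _] [F2 _]. rewrite Forall_forall in F1, F2. unfold Zb, boxplus.
  rewrite SR_flat_map.
  transitivity (SR (map (fun p => SR (map (fun p => sqrt (fst p * snd p)) V2) * sqrt (fst p * snd p)) V1));
    [| rewrite SR_scal; ring].
  apply SR_map_ext. intros p Hp. rewrite SR_flat_map.
  transitivity (SR (map (fun q => sqrt (fst p * snd p) * sqrt (fst q * snd q)) V2));
    [| rewrite SR_scal; ring].
  apply SR_map_ext. intros q Hq. destruct (F1 p Hp), (F2 q Hq). simpl.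
  rewrite !sqrt_half by auto.
  rewrite (Rmult_comm (snd p)). field.
Qed.
Lemma SR_lin3 a b c (l : channel) : SR (map (fun p => a * fst p + b * snd p + c * sqrt (fst p * snd p)) l) = a * SR (map fst l) + b * SR (map snd l) + c * Zb l.
Proof. unfold Zb. induction l; simpl; [ring|]. rewrite IHl; ring. Qed.

Lemma term_minus al be ga de : 0 <= al -> 0 <= be -> 0 <= ga -> 0 <= de ->
  sqrt (/2 * (al * ga + be * de) * (/2 * (be * ga + al * de))) <=
  /2 * (sqrt (al * be) * (ga + de) + sqrt (ga * de) * (al + be) - 2 * sqrt (al * be) * sqrt (ga * de)).
Proof.
  intros Ha Hb Hc Hd.
  rewrite (sqrt_mult al be), (sqrt_mult ga de) by auto.
  pose proof (sqrt_sqrt al Ha); pose proof (sqrt_sqrt be Hb);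
  pose proof (sqrt_sqrt ga Hc); pose proof (sqrt_sqrt de Hd).
  pose proof (sqrt_pos al); pose proof (sqrt_pos be); pose proof (sqrt_pos ga); pose proof (sqrt_pos de).
  set (a := sqrt al) in *; set (b := sqrt be) in *; set (c := sqrt ga) in *; set (d := sqrt de) in *.
  rewrite <- H, <- H0, <- H1, <- H2.
  set (R0 := /2 * (a * b * (c * c + d * d) + c * d * (a * a + b * b) - 2 * (a * b) * (c * d))).
  assert (HR : 0 <= R0).
  { unfold R0. assert (0 <= a*b*((c-d)*(c-d)) + c*d*((a-b)*(a-b)) + 2*(a*b)*(c*d)).
    { assert (0 <= a*b) by (apply Rmult_le_pos; auto). assert (0 <= c*d) by (apply Rmult_le_pos; auto).
      pose proof (Rle_0_sqr (c-d)); pose proof (Rle_0_sqr (a-b)); unfold Rsqr in *.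
      pose proof (Rmult_le_pos _ _ H7 H9). pose proof (Rmult_le_pos _ _ H8 H10). nra. }
    replace (a * b * (c * c + d * d) + c * d * (a * a + b * b) - 2 * (a * b) * (c * d))
      with (a*b*((c-d)*(c-d)) + c*d*((a-b)*(a-b)) + 2*(a*b)*(c*d)) by ring. lra. }
  assert (HP : 0 <= /2 * (a * a * (c * c) + b * b * (d * d)) * (/2 * (b * b * (c * c) + a * a * (d * d)))).
  { repeat (apply Rmult_le_pos || apply Rplus_le_le_0_compat); auto; lra. }
  rewrite <- (sqrt_square R0 HR). apply sqrt_le_1_alt.
  assert (E : R0 * R0 - /2 * (a * a * (c * c) + b * b * (d * d)) * (/2 * (b * b * (c * c) + a * a * (d * d)))
     = /2 * ((a*b) * ((c-d)*(c-d))) * ((c*d) * ((a-b)*(a-b)))) by (unfold R0; field).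
  assert (0 <= /2 * ((a*b) * ((c-d)*(c-d))) * ((c*d) * ((a-b)*(a-b)))).
  { pose proof (Rle_0_sqr (c-d)); pose proof (Rle_0_sqr (a-b)); unfold Rsqr in *.
    apply Rmult_le_pos; [apply Rmult_le_pos; [lra|]|]; apply Rmult_le_pos; auto; apply Rmult_le_pos; auto. }
  lra.
Qed.

Lemma Zb_boxminus V1 V2 : valid_channel V1 -> valid_channel V2 ->
  Zb (boxminus V1 V2) <= Zb V1 + Zb V2 - Zb V1 * Zb V2.
Proof.
  intros [F1 [A1 B1]] [F2 [A2 B2]]. rewrite Forall_forall in F1, F2. unfold Zb at 1, boxminus.
  rewrite SR_flat_map.
  apply Rle_trans with (SR (map (fun p => (/2 * Zb V2) * fst p + (/2 * Zb V2) * snd p + (1 - Zb V2) * sqrt (fst p * snd p)) V1)).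
  2:{ rewrite SR_lin3, A1, B1. lra. }
  apply SR_map_le. intros p Hp. rewrite map_map.
  apply Rle_trans with (SR (map (fun q => (/2 * sqrt (fst p * snd p)) * fst q + (/2 * sqrt (fst p * snd p)) * snd q + (/2 * (fst p + snd p) - sqrt (fst p * snd p)) * sqrt (fst q * snd q)) V2)).
  2:{ rewrite SR_lin3, A2, B2. lra. }
  apply SR_map_le. intros q Hq. destruct (F1 p Hp), (F2 q Hq). simpl.
  eapply Rle_trans; [apply term_minus; auto|]. right. field.
Qed.
Lemma ln2_pos : 0 < ln 2.
Proof. rewrite <- ln_1. apply ln_increasing; lra. Qed.

Lemma ln_le' x y : 0 < x -> x <= y -> ln x <= ln y.
Proof. intros Hx [H|H]; [left; apply ln_increasing; auto | right; subst; auto]. Qed.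

Lemma Jc_eq V : Jc V = (ln 2 - ln (1 + Zb V)) / ln 2.
Proof.
  pose proof (Zb_nonneg V). unfold Jc, log2, Rdiv.
  rewrite ln_mult, ln_Rinv by (try apply Rinv_0_lt_compat; lra). ring.
Qed.

Lemma J_ineq V1 V2 : valid_channel V1 -> valid_channel V2 ->
  Jc (boxplus V1 V2) + Jc (boxminus V1 V2) >= Jc V1 + Jc V2.
Proof.
  intros H1 H2.
  pose proof (Zb_boxplus V1 V2 H1 H2). pose proof (Zb_boxminus V1 V2 H1 H2).
  pose proof (Zb_le1 V1 H1). pose proof (Zb_le1 V2 H2).
  pose proof (Zb_nonneg V1). pose proof (Zb_nonneg V2). pose proof (Zb_nonneg (boxminus V1 V2)).
  rewrite !Jc_eq. rewrite H.
  set (z1 := Zb V1) in *. set (z2 := Zb V2) in *. set (zm := Zb (boxminus V1 V2)) in *.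
  assert (L : ln (1 + z1 * z2) + ln (1 + zm) <= ln (1 + z1) + ln (1 + z2)).
  { assert (0 <= z1 * z2 * ((1 - z1) * (1 - z2))) by (apply Rmult_le_pos; apply Rmult_le_pos; lra).
    assert (0 <= z1 * z2) by (apply Rmult_le_pos; lra).
    rewrite <- !ln_mult by lra. apply ln_le'. apply Rmult_lt_0_compat; lra.
    apply Rle_trans with ((1 + z1 * z2) * (1 + (z1 + z2 - z1 * z2))).
    - apply Rmult_le_compat_l; lra.
    - nra. }
  pose proof ln2_pos.
  apply Rle_ge. unfold Rdiv. rewrite <- !Rmult_plus_distr_r.
  apply Rmult_le_compat_r. left; apply Rinv_0_lt_compat; auto. lra.
Qed.
Section Comb.
Variable m : nat.
Hypothesis Hm : (1 <= m)%nat.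

Lemma Nwin_prop k : length (Nwin m k) = m /\ forall i, (i < m)%nat -> nth i (Nwin m k) 0%nat = Nn m (k - i).
Proof.
  induction k as [|k [IHl IHn]].
  - simpl. split; [apply repeat_length|]. intros i Hi.
    unfold Nn. simpl. destruct m as [|m']; [lia|]. simpl.
    destruct i; [reflexivity|]. rewrite (nth_indep _ 0%nat 1%nat) by (rewrite repeat_length; lia). apply nth_repeat.
  - assert (Hne : Nwin m k <> []) by (intro E; rewrite E in IHl; simpl in IHl; lia).
    destruct (exists_last Hne) as [l [a Ea]].
    assert (Ll : length l = (m - 1)%nat) by (rewrite Ea, length_app in IHl; simpl in IHl; lia).
    split.
    + simpl. rewrite Ea, removelast_last. simpl. lia.
    + intros i Hi. destruct i as [|i].
      * unfold Nn. reflexivity.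
      * simpl. rewrite Ea, removelast_last.
        rewrite <- (app_nth1 l [a]) by lia. rewrite <- Ea. apply IHn. lia.
Qed.

Lemma Nn_rec k : Nn m (S k) = (Nn m k + Nn m (S k - m))%nat.
Proof.
  destruct (Nwin_prop k) as [L N].
  change (Nn m (S k)) with (hd 1%nat (Nwin m k) + last (Nwin m k) 1)%nat.
  assert (Hne : Nwin m k <> []) by (intro E; rewrite E in L; simpl in L; lia).
  destruct (exists_last Hne) as [l [a Ea]].
  assert (Ll : length l = (m - 1)%nat) by (rewrite Ea, length_app in L; simpl in L; lia).
  f_equal.
  - rewrite Ea, last_last. pose proof (N (m-1)%nat ltac:(lia)).
    rewrite Ea, <- Ll, nth_middle in H. rewrite H. f_equal. lia.
Qed.

Lemma Nn_pos n : (1 <= Nn m n)%nat.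
Proof.
  induction n.
  - unfold Nn; simpl. destruct m; [lia|simpl; lia].
  - rewrite Nn_rec. lia.
Qed.

Lemma Nn_mono a b : (a <= b)%nat -> (Nn m a <= Nn m b)%nat.
Proof. induction 1; auto. rewrite Nn_rec. lia. Qed.

Lemma In_firstn {A} k (l : list A) x : In x (firstn k l) -> In x l.
Proof. intros H. rewrite <- (firstn_skipn k l). apply in_or_app; auto. Qed.
Lemma In_skipn {A} k (l : list A) x : In x (skipn k l) -> In x l.
Proof. intros H. rewrite <- (firstn_skipn k l). apply in_or_app; auto. Qed.

Lemma Sset_S n : Sset m (S n) =
    map (fun s => s ++ [Plus]) (firstn (Nn m (S n - m)) (Sset m n)) ++
    map (fun s => s ++ [Star]) (skipn (Nn m (S n - m)) (Sset m n)) ++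
    map (fun s => s ++ [Minus]) (firstn (Nn m (S n - m)) (Sset m n)).
Proof. reflexivity. Qed.

Lemma Sset_len n : length (Sset m n) = Nn m n.
Proof.
  induction n.
  - unfold Nn; simpl. destruct m; [lia|reflexivity].
  - rewrite Sset_S. rewrite !length_app, !length_map, length_firstn, length_skipn, IHn.
    rewrite Nn_rec. pose proof (Nn_mono (S n - m) n ltac:(lia)). lia.
Qed.

Lemma Sset_elem n s : In s (Sset m n) -> length s = n.
Proof.
  revert s; induction n; intros s Hs.
  - simpl in Hs. destruct Hs as [<-|[]]. reflexivity.
  - rewrite Sset_S in Hs. rewrite !in_app_iff in Hs.
    destruct Hs as [H|[H|H]]; apply in_map_iff in H as [t [<- Ht]];
      rewrite length_app; simpl;
      (apply In_firstn in Ht || apply In_skipn in Ht); rewrite IHn; auto; lia.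
Qed.

Lemma firstn_app_len {A} n (s l : list A) : length s = n -> firstn n (s ++ l) = s.
Proof. intros <-. rewrite firstn_app, firstn_all, Nat.sub_diag. simpl. apply app_nil_r. Qed.

Lemma map_firstn_S n : map (firstn n) (Sset m (S n)) = Sset m n ++ firstn (Nn m (S n - m)) (Sset m n).
Proof.
  rewrite Sset_S. rewrite !map_app, !map_map.
  assert (G : forall x L, (forall s, In s L -> In s (Sset m n)) -> map (fun s => firstn n (s ++ [x])) L = L).
  { intros x L HL. rewrite <- (map_id L) at 2. apply map_ext_in. intros s Hs.
    apply firstn_app_len. apply Sset_elem; auto. }
  rewrite !G by (intros; eauto using In_firstn, In_skipn).
  rewrite app_assoc, firstn_skipn. reflexivity.
Qed.

Lemma firstn_Sset n j : (j <= Nn m n)%nat -> map (firstn n) (firstn j (Sset m (S n))) = firstn j (Sset m n).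
Proof.
  intros Hj. rewrite <- firstn_map, map_firstn_S, firstn_app, Sset_len.
  replace (j - Nn m n)%nat with 0%nat by lia. simpl. apply app_nil_r.
Qed.

Lemma prefix_Sset d n : (d <= n)%nat -> map (firstn d) (firstn (Nn m d) (Sset m n)) = Sset m d.
Proof.
  induction 1 as [|m0 H IHle].
  - rewrite firstn_all2 by (rewrite Sset_len; lia).
    rewrite <- (map_id (Sset m d)) at 2. apply map_ext_in. intros s Hs.
    rewrite <- (Sset_elem d s Hs) at 1. apply firstn_all.
  - rewrite <- IHle, <- (firstn_Sset m0 (Nn m d)) by (apply Nn_mono; auto).
    rewrite map_map. apply map_ext. intros s. rewrite firstn_firstn. f_equal. lia.
Qed.
End Comb.
Lemma Wfuel_S m W f t : t <> [] -> Wfuel m W (S f) t =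
  match last t Star with
  | Plus => boxplus (Wfuel m W f (firstn (length t - m) t)) (Wfuel m W f (removelast t))
  | Minus => boxminus (Wfuel m W f (firstn (length t - m) t)) (Wfuel m W f (removelast t))
  | Star => Wfuel m W f (removelast t)
  end.
Proof. destruct t; [congruence|reflexivity]. Qed.

Lemma Wfuel_valid m W f t : valid_channel W -> valid_channel (Wfuel m W f t).
Proof.
  intros HW. revert t; induction f; intros t; [exact HW|].
  destruct t as [|a t]; [exact HW|]. rewrite Wfuel_S by congruence.
  destruct (last _ _); auto using boxplus_valid, boxminus_valid.
Qed.

Lemma Wt_valid m W t : valid_channel W -> valid_channel (Wt m W t).
Proof. apply Wfuel_valid. Qed.

Lemma length_removelast' {A} (t : list A) : t <> [] -> length (removelast t) = (length t - 1)%nat.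
Proof. intros H. destruct (exists_last H) as [l [a ->]]. rewrite removelast_last, length_app. simpl. lia. Qed.

Lemma Wfuel_fuel m W f1 f2 t : (1 <= m)%nat -> (length t <= f1)%nat -> (length t <= f2)%nat -> Wfuel m W f1 t = Wfuel m W f2 t.
Proof.
  intros Hm. revert f2 t; induction f1; intros f2 t H1 H2.
  - destruct t; [|simpl in H1; lia]. destruct f2; reflexivity.
  - destruct t as [|a t0] eqn:Et; [destruct f2; reflexivity|].
    destruct f2; [simpl in H2; lia|].
    rewrite <- Et in *. rewrite !Wfuel_S by (subst; congruence).
    assert (Hne : t <> []) by (subst; congruence).
    pose proof (length_removelast' t Hne).
    assert (length (firstn (length t - m) t) <= length t - 1)%nat by (rewrite length_firstn; lia).
    assert (length t >= 1)%nat by (subst; simpl; lia).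
    rewrite (IHf1 f2 (removelast t)) by lia.
    rewrite (IHf1 f2 (firstn (length t - m) t)) by lia. reflexivity.
Qed.

Lemma Wt_snoc m W p x : (1 <= m)%nat -> Wt m W (p ++ [x]) =
  match x with
  | Plus => boxplus (Wt m W (firstn (S (length p) - m) p)) (Wt m W p)
  | Minus => boxminus (Wt m W (firstn (S (length p) - m) p)) (Wt m W p)
  | Star => Wt m W p
  end.
Proof.
  intros Hm. unfold Wt at 1.
  assert (L : length (p ++ [x]) = S (length p)) by (rewrite length_app; simpl; lia).
  rewrite L, Wfuel_S by (destruct p; discriminate).
  rewrite L, last_last, removelast_last.
  rewrite firstn_app. replace (S (length p) - m - length p)%nat with 0%nat by lia.
  change (firstn 0 [x]) with (@nil sym). rewrite app_nil_r.
  assert (Wfuel m W (length p) (firstn (S (length p) - m) p) = Wt m W (firstn (S (length p) - m) p)).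
  { unfold Wt. apply Wfuel_fuel; auto; rewrite length_firstn; lia. }
  destruct x; rewrite ?H; reflexivity.
Qed.
Definition Tn m W n := SR (map (fun s => Jc (Wt m W s)) (Sset m n)).
Definition En m W n := Tn m W n / INR (Nn m n).

Lemma T_rec m W n : (1 <= m)%nat -> valid_channel W -> Tn m W (S n) >= Tn m W n + Tn m W (S n - m).
Proof.
  intros Hm HW. unfold Tn. rewrite Sset_S, !map_app, !SR_app, !map_map.
  set (k := Nn m (S n - m)). set (P := Sset m n). set (d := (S n - m)%nat).
  set (g := fun s => Jc (Wt m W s)).
  assert (HL : forall s, In s P -> length s = n) by (intros; eapply Sset_elem; eauto).
  rewrite (SR_map_ext (fun s => Jc (Wt m W (s ++ [Plus]))) (fun s => Jc (boxplus (Wt m W (firstn d s)) (Wt m W s))))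
    by (intros s Hs; rewrite Wt_snoc, (HL s) by eauto using In_firstn; reflexivity).
  rewrite (SR_map_ext (fun s => Jc (Wt m W (s ++ [Star]))) g)
    by (intros s Hs; rewrite Wt_snoc by auto; reflexivity).
  rewrite (SR_map_ext (fun s => Jc (Wt m W (s ++ [Minus]))) (fun s => Jc (boxminus (Wt m W (firstn d s)) (Wt m W s))))
    by (intros s Hs; rewrite Wt_snoc, (HL s) by eauto using In_firstn; reflexivity).
  pose proof (SR2_le (fun s => Jc (boxplus (Wt m W (firstn d s)) (Wt m W s)))
                     (fun s => Jc (boxminus (Wt m W (firstn d s)) (Wt m W s)))
                     (fun s => g (firstn d s)) g (firstn k P)) as H2.
  assert (H3 : SR (map g P) = SR (map g (firstn k P)) + SR (map g (skipn k P)))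
    by (rewrite <- SR_app, <- map_app, firstn_skipn; reflexivity).
  assert (H4 : SR (map (fun s => g (firstn d s)) (firstn k P)) = SR (map g (Sset m d))).
  { rewrite <- (prefix_Sset m Hm d n) by (unfold d; lia). rewrite map_map. reflexivity. }
  fold g. rewrite H3, <- H4.
  assert (SR (map (fun s => Jc (boxplus (Wt m W (firstn d s)) (Wt m W s))) (firstn k P)) +
          SR (map (fun s => Jc (boxminus (Wt m W (firstn d s)) (Wt m W s))) (firstn k P)) >=
          SR (map (fun s => g (firstn d s)) (firstn k P)) + SR (map g (firstn k P))).
  { apply H2. intros; unfold g; apply J_ineq; apply Wt_valid; auto. }
  lra.
Qed.
Lemma Nn0 m : (1 <= m)%nat -> Nn m 0 = 1%nat.
Proof. intros. unfold Nn; simpl. destruct m; [lia|reflexivity]. Qed.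

Lemma INR_Nn_pos m n : (1 <= m)%nat -> 0 < INR (Nn m n).
Proof. intros. apply lt_0_INR. pose proof (Nn_pos m H n). lia. Qed.

Lemma EJ_nat m W z : (1 <= m)%nat -> EJ m W z = En m W (Z.to_nat z).
Proof.
  intros Hm. unfold EJ, En. destruct (z <=? 0)%Z eqn:E.
  - apply Z.leb_le in E. replace (Z.to_nat z) with 0%nat by lia.
    rewrite Nn0 by auto. unfold Tn. simpl. unfold Wt. simpl. field.
  - unfold Tn, Rdiv. ring.
Qed.

Lemma E_step m W n : (1 <= m)%nat -> valid_channel W -> En m W (S n) >= Rmin (En m W n) (En m W (S n - m)).
Proof.
  intros Hm HW. pose proof (T_rec m W n Hm HW).
  unfold En in *. rewrite Nn_rec by auto. rewrite plus_INR.
  pose proof (INR_Nn_pos m n Hm). pose proof (INR_Nn_pos m (S n - m) Hm).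
  set (a := INR (Nn m n)) in *. set (b := INR (Nn m (S n - m))) in *.
  set (mu := Rmin (Tn m W n / a) (Tn m W (S n - m) / b)).
  pose proof (Rmin_l (Tn m W n / a) (Tn m W (S n - m) / b)).
  pose proof (Rmin_r (Tn m W n / a) (Tn m W (S n - m) / b)). fold mu in H2, H3.
  assert (Tn m W n >= mu * a).
  { apply Rle_ge. apply Rmult_le_reg_r with (/a). apply Rinv_0_lt_compat; auto.
    replace (mu * a * /a) with mu by (field; lra). exact H2. }
  assert (Tn m W (S n - m) >= mu * b).
  { apply Rle_ge. apply Rmult_le_reg_r with (/b). apply Rinv_0_lt_compat; auto.
    replace (mu * b * /b) with mu by (field; lra). exact H3. }
  apply Rle_ge. apply Rmult_le_reg_r with (a + b). lra.
  replace (Tn m W (S n) / (a + b) * (a + b)) with (Tn m W (S n)) by (field; lra). nra.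
Qed.

Lemma f_step m W z : (1 <= m)%nat -> valid_channel W -> (1 <= z)%Z ->
  EJ m W z >= Rmin (EJ m W (z - 1)) (EJ m W (z - Z.of_nat m)).
Proof.
  intros Hm HW Hz. rewrite !EJ_nat by auto.
  set (n := (Z.to_nat z - 1)%nat).
  replace (Z.to_nat z) with (S n) by lia.
  replace (Z.to_nat (z - 1)) with n by lia.
  replace (Z.to_nat (z - Z.of_nat m)) with (S n - m)%nat by lia.
  apply E_step; auto.
Qed.

Lemma Rmin_fold_ge {A} c a (g : A -> R) l : c <= a -> (forall i, In i l -> c <= g i) -> c <= fold_right Rmin a (map g l).
Proof.
  induction l; simpl; intros Ha H; auto. apply Rmin_glb; auto.
Qed.

Lemma Rmin_fold_le {A} a (g : A -> R) l i : In i l -> fold_right Rmin a (map g l) <= g i.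
Proof.
  induction l; simpl; intros H; [destruct H|]. destruct H as [<-|H].
  - apply Rmin_l.
  - eapply Rle_trans; [apply Rmin_r|auto].
Qed.

Theorem lemma2 (m : nat) (W : channel) :
  (1 <= m)%nat -> valid_channel W ->
  forall k : nat, (1 <= k)%nat -> EJhat m W k >= EJhat m W (k - 1).
Proof.
  intros Hm HW k Hk.
  set (H := EJhat m W (k - 1)).
  set (f := EJ m W).
  set (K := Z.of_nat (k - 1)).
  set (M := Z.of_nat m).
  assert (HK : Z.of_nat k = (K + 1)%Z) by (unfold K; lia).
  assert (Win : forall i, (i < m)%nat -> H <= f (K * M - Z.of_nat i)%Z).
  { intros i Hi. unfold H, EJhat, f, K, M.
    refine (Rmin_fold_le _ (fun i => EJ m W (Z.of_nat (k-1) * Z.of_nat m - Z.of_nat i)%Z) _ i _).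
    apply in_seq. lia. }
  assert (Cl : forall j, (j < m)%nat -> H <= f (K * M + 1 + Z.of_nat j)%Z).
  { induction j; intros Hj.
    - assert (Hs := f_step m W (K * M + 1 + Z.of_nat 0) Hm HW ltac:(unfold K, M; nia)).
      fold f in Hs.
      replace (K * M + 1 + Z.of_nat 0 - 1)%Z with (K * M - Z.of_nat 0)%Z in Hs by lia.
      replace (K * M + 1 + Z.of_nat 0 - Z.of_nat m)%Z with (K * M - Z.of_nat (m - 1))%Z in Hs by (unfold M; lia).
      pose proof (Win 0%nat ltac:(lia)). pose proof (Win (m-1)%nat ltac:(lia)).
      pose proof (Rmin_glb _ _ _ H0 H1). lra.
    - assert (Hs := f_step m W (K * M + 1 + Z.of_nat (S j)) Hm HW ltac:(unfold K, M; nia)).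
      fold f in Hs.
      replace (K * M + 1 + Z.of_nat (S j) - 1)%Z with (K * M + 1 + Z.of_nat j)%Z in Hs by lia.
      replace (K * M + 1 + Z.of_nat (S j) - Z.of_nat m)%Z with (K * M - Z.of_nat (m - 1 - S j))%Z in Hs by (unfold M; lia).
      pose proof (IHj ltac:(lia)). pose proof (Win (m - 1 - S j)%nat ltac:(lia)).
      pose proof (Rmin_glb _ _ _ H0 H1). lra. }
  apply Rle_ge. unfold EJhat. fold f. rewrite HK. fold M.
  apply Rmin_fold_ge.
  - replace ((K + 1) * M)%Z with (K * M + 1 + Z.of_nat (m - 1))%Z by (unfold M; lia).
    apply Cl; lia.
  - intros i Hi. apply in_seq in Hi.
    replace ((K + 1) * M - Z.of_nat i)%Z with (K * M + 1 + Z.of_nat (m - 1 - i))%Z by (unfold M; lia).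
    apply Cl; lia.
Qed.
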